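(* Let $K$ be a commutative ring with identity, let $G$ be a group and $n\ge 0$. If $G$ is of type $FP_n$ over $K$ (i.e. left-$FP_n$), then $G$ is bi-$FP_n$ over $K$.
   Context: $KG$ is the group ring, with augmentation $\varepsilon:KG\to K$, $g\mapsto 1$. A module is of type $FP_n$ if there is an exact sequence $0\leftarrow M\leftarrow P_0\leftarrow\cdots\leftarrow P_n$ with $P_0,\dots,P_n$ finitely generated free modules. $G$ is of type $FP_n$ over $K$ if $K$, regarded as a left $KG$-module via $\varepsilon$, is of type $FP_n$ (for groups left and right versions coincide). A $(KG,KG)$-bimodule is an abelian group with commuting left and right $KG$-actions with $km=mk$ for $k\in K$; the free bimodule of rank $1$ is $KG\otimes_K KG$ with $a(u\otimes v)b=au\otimes vb$, and a free bimodule of rank $r$ is a direct sum of $r$ copies of it. $G$ is bi-$FP_n$ if $KG$, regarded as a $(KG,KG)$-bimodule by left and right multiplication, admits an exact sequence $0\leftarrow KG\leftarrow F_0\leftarrow\cdots\leftarrow F_n$ with $F_0,\dots,F_n$ finitely generated free $(KG,KG)$-bimodules. *)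

(* Defs.v *)
From HB Require Import structures.
From mathcomp Require Import all_boot all_order all_algebra.
From mathcomp Require Import finmap.

Set Implicit Arguments.
Unset Strict Implicit.
Unset Printing Implicit Defensive.

Import GRing.Theory.
Local Open Scope fset_scope.
Local Open Scope ring_scope.

Section GroupRing.
Variables (K : comPzRingType) (G : groupType).

(* The group ring KG: finitely supported functions G -> K, i.e.           *)
(* formal finite K-linear combinations  sum_g a(g) g.                      *)
Definition KG := {fsfun G -> K with 0}.

Definition kg_zero : KG := [fsfun x in fset0 => (0 : K) | 0].
Definition kg_one : KG := [fsfun x in [fset (1%g : G)] => (1 : K) | 0].
Definition kg_add (a b : KG) : KG :=
  [fsfun x in finsupp a `|` finsupp b => a x + b x | 0].
Definition kg_mul (a b : KG) : KG :=
  [fsfun g in [fset (x * y)%g | x in finsupp a, y in finsupp b] =>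
     \sum_(x <- finsupp a) a x * b (x^-1 * g)%g | 0].
Definition augm (a : KG) : K := \sum_(g <- finsupp a) a g.

(* KG (x)_K KG, identified with K[G x G] via  g (x) h  <-> (g, h).        *)
Definition KG2 := {fsfun (G * G)%type -> K with 0}.

Definition kg2_zero : KG2 := [fsfun x in fset0 => (0 : K) | 0].
Definition kg2_add (u v : KG2) : KG2 :=
  [fsfun x in finsupp u `|` finsupp v => u x + v x | 0].
(* bimodule structure  a (g (x) h) b = a g (x) h b, extended bilinearly  *)
Definition kg2_bact (a : KG) (u : KG2) (b : KG) : KG2 :=
  [fsfun p in [fset ((x * q.1.1)%g, (q.1.2 * q.2)%g) |
                  x in finsupp a, q in finsupp u `*` finsupp b] =>
     \sum_(x <- finsupp a) \sum_(y <- finsupp b)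
        a x * u ((x^-1 * p.1)%g, (p.2 * y^-1)%g) * b y | 0].

Record lmod := LMod {
  lcar :> Type;
  lzero : lcar;
  ladd : lcar -> lcar -> lcar;
  lact : KG -> lcar -> lcar }.

Definition lhom (M N : lmod) (f : M -> N) : Prop :=
  (forall x y, f (ladd x y) = ladd (f x) (f y)) /\
  (forall a x, f (lact a x) = lact a (f x)).

Definition freeL (r : nat) : lmod :=
  @LMod ('I_r -> KG) (fun _ => kg_zero)
        (fun u v i => kg_add (u i) (v i)) (fun a u i => kg_mul a (u i)).

Definition trivK : lmod :=
  @LMod K 0 (fun x y => x + y) (fun a k => augm a * k).

Record bimod := BiMod {
  bcar :> Type;
  bzero : bcar;
  badd : bcar -> bcar -> bcar;
  bact : KG -> bcar -> KG -> bcar }.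

Definition bhom (M N : bimod) (f : M -> N) : Prop :=
  (forall x y, f (badd x y) = badd (f x) (f y)) /\
  (forall a x b, f (bact a x b) = bact a (f x) b).

Definition freeB (r : nat) : bimod :=
  @BiMod ('I_r -> KG2) (fun _ => kg2_zero)
         (fun u v i => kg2_add (u i) (v i)) (fun a u b i => kg2_bact a (u i) b).

Definition regB : bimod :=
  @BiMod KG kg_zero kg_add (fun a m b => kg_mul (kg_mul a m) b).

(* A left module M is of type FP_n: there is an exact sequence            *)
(*   0 <- M <-e- P_0 <-d_0- P_1 <-d_1- ... <-d_(n-1)- P_n                *)
(* with P_i = KG^(r i) finitely generated free (exact at M, P_0, ...,     *)
(* P_(n-1); the maps d_i for i >= n are irrelevant).                     *)
Definition lFP (n : nat) (M : lmod) : Prop :=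
  exists (r : nat -> nat) (e : freeL (r 0%N) -> M)
         (d : forall i : nat, freeL (r i.+1) -> freeL (r i)),
    [/\ lhom e,
        (forall i, lhom (d i)),
        (forall m : M, exists x, e x = m),
        ((0 < n)%N -> forall x, e x = lzero M <-> exists y, d 0%N y = x) &
        (forall i : nat, (i.+1 < n)%N ->
           forall x, d i x = lzero (freeL (r i)) <->
                     exists y, d i.+1 y = x)].

Definition bFP (n : nat) (M : bimod) : Prop :=
  exists (r : nat -> nat) (e : freeB (r 0%N) -> M)
         (d : forall i : nat, freeB (r i.+1) -> freeB (r i)),
    [/\ bhom e,
        (forall i, bhom (d i)),
        (forall m : M, exists x, e x = m),
        ((0 < n)%N -> forall x, e x = bzero M <-> exists y, d 0%N y = x) &
        (forall i : nat, (i.+1 < n)%N ->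
           forall x, d i x = bzero (freeB (r i)) <->
                     exists y, d i.+1 y = x)].

Definition group_FP (n : nat) : Prop := lFP n trivK.
Definition group_biFP (n : nat) : Prop := bFP n regB.

End GroupRing.

(* Main.v *)
Require Import Defs.
From HB Require Import structures.
From mathcomp Require Import all_boot all_order all_algebra.
From mathcomp Require Import finmap.
From Stdlib Require Import FunctionalExtensionality ClassicalEpsilon.

Set Implicit Arguments.
Unset Strict Implicit.
Unset Printing Implicit Defensive.
Import GRing.Theory.
Local Open Scope fset_scope.
Local Open Scope ring_scope.

Section S.
Variables (K : comPzRingType) (G : groupType).
Local Notation KG := (KG K G).
Local Notation KG2 := (KG2 K G).

Lemma fsE (T : choiceType) (S : {fset T}) (h : T -> K) x :
  (x \notin S -> h x = 0) -> ([fsfun a in S => h a | 0] : {fsfun T -> K with 0}) x = h x.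
Proof. by rewrite fsfun_fun; case: ifP => // _ ->. Qed.

Lemma sum_supp (T : choiceType) (f : {fsfun T -> K with 0}) (S : {fset T}) (F : T -> K) :
  finsupp f `<=` S -> (forall x, f x = 0 -> F x = 0) ->
  \sum_(x <- finsupp f) F x = \sum_(x <- S) F x.
Proof.
move=> sub H; apply: big_fset_incl => // x _ xn.
by apply: H; move: xn; rewrite mem_finsupp negbK => /eqP.
Qed.

Lemma kg_zeroE g : kg_zero K G g = 0.
Proof. by rewrite fsfun_fun. Qed.
Lemma kg2_zeroE g : kg2_zero K G g = 0.
Proof. by rewrite fsfun_fun. Qed.

Lemma kg_addE (a b : KG) g : kg_add a b g = a g + b g.
Proof.
rewrite fsE // inE negb_or !mem_finsupp !negbK => /andP[/eqP-> /eqP->].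
by rewrite addr0.
Qed.
Lemma kg2_addE (a b : KG2) g : kg2_add a b g = a g + b g.
Proof.
rewrite fsE // inE negb_or !mem_finsupp !negbK => /andP[/eqP-> /eqP->].
by rewrite addr0.
Qed.

Lemma kg_mulE (a b : KG) g :
  kg_mul a b g = \sum_(x <- finsupp a) a x * b (x^-1 * g)%g.
Proof.
rewrite fsE // => gn; rewrite big1_seq // => x /= xa.
have [/eqP->|bn] := boolP (b (x^-1 * g)%g == 0); first by rewrite mulr0.
case/negP: gn; apply/imfset2P; exists x => //; exists (x^-1 * g)%g.
  by rewrite mem_finsupp.
by rewrite mulVKg.
Qed.


Lemma kg_mulE' (a b : KG) g :
  kg_mul a b g = \sum_(y <- finsupp b) a (g * y^-1)%g * b y.
Proof.
rewrite kg_mulE.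
set A := finsupp a `|` [fset (g * y^-1)%g | y in finsupp b].
rewrite (@sum_supp _ a A); last 2 first.
- exact: fsubsetUl.
- by move=> x ->; rewrite mul0r.
have inj : {in A &, injective (fun x => (x^-1 * g)%g)}.
  by move=> x y _ _ /(mulIg g)/invg_inj.
rewrite (@sum_supp _ b [fset (x^-1 * g)%g | x in A]); last 2 first.
- apply/fsubsetP => y yb; apply/imfsetP; exists (g * y^-1)%g.
    by rewrite inE; apply/orP; right; apply/imfsetP; exists y.
  by rewrite invgM invgK mulgVK.
- by move=> x ->; rewrite mulr0.
rewrite [RHS]big_imfset //=.
by apply: eq_bigr => x _; rewrite invgM invgK mulVKg.
Qed.

Lemma kg2_bactE (a : KG) (u : KG2) (b : KG) p :
  kg2_bact a u b p = \sum_(x <- finsupp a) \sum_(y <- finsupp b)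
        a x * u ((x^-1 * p.1)%g, (p.2 * y^-1)%g) * b y.
Proof.
rewrite fsE // => pn; rewrite big1_seq // => x /= xa.
rewrite big1_seq // => y /= yb.
have [/eqP->|un] := boolP (u ((x^-1 * p.1)%g, (p.2 * y^-1)%g) == 0).
  by rewrite mulr0 mul0r.
case/negP: pn; apply/imfset2P; exists x => //.
exists (((x^-1 * p.1)%g, (p.2 * y^-1)%g), y).
  by rewrite in_fsetM /= mem_finsupp un.
by rewrite /= mulVKg mulgVK -surjective_pairing.
Qed.

Definition sc (l : K) (g : G) : KG := [fsfun x in [fset g] => l | 0].

Lemma sc_mulE l g (f : KG) y : kg_mul (sc l g) f y = l * f (g^-1 * y)%g.
Proof.
rewrite kg_mulE (@sum_supp _ _ [fset g]); last 2 first.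
- apply/fsubsetP => x; rewrite mem_finsupp /sc fsfun_fun.
  by case: ifP => // _; rewrite eqxx.
- by move=> x ->; rewrite mul0r.
by rewrite big_seq_fset1 /sc fsfun_fun inE eqxx.
Qed.

Lemma sc_augm l g : augm (sc l g) = l.
Proof.
rewrite /augm (@sum_supp _ _ [fset g]); last 2 first.
- apply/fsubsetP => x; rewrite mem_finsupp /sc fsfun_fun.
  by case: ifP => // _; rewrite eqxx.
- by [].
by rewrite big_seq_fset1 /sc fsfun_fun inE eqxx.
Qed.

Section Slice.
Variable r : nat.

Definition slice (w : 'I_r -> KG2) (c : G) : 'I_r -> KG := fun k =>
  [fsfun y in [fset (q.2)^-1%g | q in finsupp (w k)] => w k ((c * y)%g, y^-1%g) | 0].

Lemma sliceE w c k y : slice w c k y = w k ((c * y)%g, y^-1%g).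
Proof.
rewrite /slice fsE // => yn; apply/eqP; rewrite -[_ == 0]negbK -mem_finsupp.
apply: contra yn => H; apply/imfsetP; exists ((c * y)%g, y^-1%g) => //=.
by rewrite invgK.
Qed.

Lemma slice_inj w w' : (forall c, slice w c = slice w' c) -> w = w'.
Proof.
move=> H; apply: functional_extensionality => k; apply/fsfunP => q.
have := congr1 (fun v : 'I_r -> KG => v k (q.2^-1)%g) (H (q.1 * q.2)%g).
by rewrite !sliceE mulgK invgK -surjective_pairing.
Qed.

Definition unslice (C : seq G) (p : G -> 'I_r -> KG) : 'I_r -> KG2 := fun k =>
  [fsfun q in \bigcup_(c <- C) [fset ((c * z)%g, z^-1%g) | z in finsupp (p c k)] =>
     if (q.1 * q.2)%g \in C then p (q.1 * q.2)%g k (q.2^-1)%g else 0 | 0].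

Lemma unsliceE C p k q : unslice C p k q =
  if (q.1 * q.2)%g \in C then p (q.1 * q.2)%g k (q.2^-1)%g else 0.
Proof.
rewrite /unslice fsE // => qn; case: ifP => // qC.
apply/eqP; rewrite -[_ == 0]negbK -mem_finsupp.
apply: contra qn => H; apply/bigfcupP; exists (q.1 * q.2)%g; first by rewrite qC.
apply/imfsetP; exists (q.2^-1)%g => //=.
by rewrite invgK mulgK -surjective_pairing.
Qed.

Lemma slice_unslice C p c : slice (unslice C p) c =
  if c \in C then p c else (fun _ => kg_zero K G).
Proof.
apply: functional_extensionality => k; apply/fsfunP => y.
rewrite sliceE unsliceE /= mulgK invgK.
by case: ifP => //; rewrite kg_zeroE.
Qed.

Definition Cw (w : 'I_r -> KG2) : seq G :=
  flatten [seq [seq (q.1 * q.2)%g | q <- finsupp (w k)] | k <- enum 'I_r].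

Lemma slice_out w c : c \notin Cw w -> slice w c = (fun _ => kg_zero K G).
Proof.
move=> cn; apply: functional_extensionality => k; apply/fsfunP => y.
rewrite sliceE kg_zeroE; apply/eqP; rewrite -[_ == 0]negbK -mem_finsupp.
apply: contra cn => H; apply/flattenP.
exists [seq (q.1 * q.2)%g | q <- finsupp (w k)].
  by apply/mapP; exists k => //; rewrite mem_enum.
by apply/mapP; exists ((c * y)%g, y^-1%g) => //=; rewrite mulgK.
Qed.


End Slice.

Lemma self_add0 (x : K) : x = x + x -> x = 0.
Proof. by move/(congr1 (fun t => t - x)); rewrite subrr addrK. Qed.

Local Notation V := (freeL K G).

Lemma zero_add_zero n : ladd (lzero (V n)) (lzero (V n)) = lzero (V n).
Proof.
apply: functional_extensionality => k; apply/fsfunP => y.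
by rewrite /= kg_addE kg_zeroE addr0.
Qed.

Lemma lhom_zero r1 r2 (d : V r1 -> V r2) : lhom d -> d (lzero _) = lzero _.
Proof.
move=> [dadd _]; have H := dadd (lzero _) (lzero _).
rewrite zero_add_zero in H.
apply: functional_extensionality => k; apply/fsfunP => y.
have := congr1 (fun v : 'I_r2 -> KG => v k y) H.
by rewrite /= kg_addE kg_zeroE => /self_add0.
Qed.

Lemma ehom_zero n (e : V n -> trivK K G) : lhom e -> e (lzero _) = 0.
Proof.
move=> [eadd _]; have H := eadd (lzero _) (lzero _).
rewrite zero_add_zero /= in H.
exact: self_add0.
Qed.

Definition bigL n (s : seq G) (F : G -> V n) : V n :=
  \big[@ladd _ _ (V n)/lzero (V n)]_(i <- s) F i.

Lemma bigLE n s F k y : (bigL s F : 'I_n -> KG) k y = \sum_(i <- s) F i k y.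
Proof.
rewrite /bigL; elim: s => [|i s IH]; first by rewrite !big_nil /= kg_zeroE.
by rewrite !big_cons /= kg_addE IH.
Qed.

Lemma lhom_big r1 r2 (d : V r1 -> V r2) s F : lhom d ->
  d (bigL s F) = bigL s (fun i => d (F i)).
Proof.
move=> dh; rewrite /bigL; elim: s => [|i s IH]; first by rewrite !big_nil lhom_zero.
by rewrite !big_cons dh.1 IH.
Qed.

Lemma ehom_big n (e : V n -> trivK K G) s F : lhom e ->
  e (bigL s F) = \sum_(i <- s) e (F i).
Proof.
move=> eh; rewrite /bigL; elim: s => [|i s IH]; first by rewrite !big_nil ehom_zero.
by rewrite !big_cons eh.1 IH.
Qed.

Lemma slice_bact n (a : KG) (w : 'I_n -> KG2) (b : KG) c :
  slice (fun k => kg2_bact a (w k) b) c =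
  bigL (finsupp a) (fun u => bigL (finsupp b) (fun v =>
     lact (sc (a u * b v) (v^-1)%g) (slice w (u^-1 * c * v^-1)%g : V n))).
Proof.
apply: functional_extensionality => k; apply/fsfunP => y.
rewrite sliceE kg2_bactE bigLE; apply: eq_bigr => u _.
rewrite bigLE; apply: eq_bigr => v _.
rewrite /= sc_mulE sliceE invgK /=.
have -> : (u^-1 * c * v^-1 * (v * y))%g = (u^-1 * (c * y))%g.
  by rewrite !mulgA mulgVK.
by rewrite invgM mulrAC.
Qed.

Lemma slice_add n (w w' : 'I_n -> KG2) c :
  slice (fun k => kg2_add (w k) (w' k)) c =
  ladd (slice w c : V n) (slice w' c : V n).
Proof.
apply: functional_extensionality => k; apply/fsfunP => y.
by rewrite sliceE /= kg_addE !sliceE kg2_addE.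
Qed.


Local Notation W := (freeB K G).

Definition Dlift n1 n2 (d : V n1 -> V n2) (w : W n1) : W n2 :=
  unslice (Cw w) (fun c => d (slice w c)).

Lemma slice_Dlift n1 n2 (d : V n1 -> V n2) w c : lhom d ->
  slice (Dlift d w) c = d (slice w c).
Proof.
move=> dh; rewrite /Dlift slice_unslice; case: ifP => // /negbT cn.
by rewrite slice_out // (lhom_zero dh).
Qed.

Lemma Dlift_hom n1 n2 (d : V n1 -> V n2) : lhom d -> bhom (Dlift d).
Proof.
move=> dh; split.
- move=> x y; apply: slice_inj => c.
  by rewrite /= slice_add !slice_Dlift // slice_add dh.1.
- move=> a x b; apply: slice_inj => c.
  rewrite /= slice_bact slice_Dlift // slice_bact lhom_big //.
  congr bigL; apply: functional_extensionality => u.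
  rewrite lhom_big //; congr bigL; apply: functional_extensionality => v.
  by rewrite dh.2 slice_Dlift.
Qed.

Definition Elift n (e : V n -> trivK K G) (w : W n) : KG :=
  [fsfun c in [fset c | c in Cw w] => (e (slice w c) : K) | 0].

Lemma EliftE n (e : V n -> trivK K G) w c : lhom e -> Elift e w c = e (slice w c).
Proof.
move=> eh; rewrite /Elift fsE // => cn.
rewrite slice_out ?ehom_zero //; apply: contra cn => H.
by rewrite inE.
Qed.

Lemma Elift_hom n (e : V n -> trivK K G) : lhom e -> @bhom K G (W n) (regB K G) (Elift e).
Proof.
move=> eh; split.
- move=> x y; apply/fsfunP => c.
  by rewrite /= kg_addE !EliftE // slice_add eh.1.
- move=> a x b; apply/fsfunP => c.
  rewrite /= EliftE // slice_bact ehom_big // kg_mulE'.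
  under eq_bigr => u _ do rewrite ehom_big //.
  rewrite exchange_big /=.
  apply: eq_bigr => v _; rewrite kg_mulE big_distrl /=.
  apply: eq_bigr => u _; rewrite eh.2 /= sc_augm EliftE // !mulgA.
  by rewrite mulrAC.
Qed.

Lemma slice_zero n c : slice (bzero (W n)) c = lzero (V n).
Proof.
apply: functional_extensionality => k; apply/fsfunP => y.
by rewrite sliceE /= kg2_zeroE kg_zeroE.
Qed.

Lemma lift_pre n1 n2 (d : V n1 -> V n2) (w : W n2) : lhom d ->
  (forall c, exists y, d y = slice w c) -> exists y, Dlift d y = w.
Proof.
move=> dh H.
pose f c := proj1_sig (constructive_indefinite_description _ (H c)).
exists (unslice (Cw w) f); apply: slice_inj => c.
rewrite slice_Dlift // slice_unslice; case: ifP => cw.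
  by rewrite /f; case: constructive_indefinite_description.
by rewrite (lhom_zero dh) slice_out ?cw.
Qed.

End S.

Theorem theorem2 (K : comPzRingType) (G : groupType) (n : nat) :
  group_FP K G n -> group_biFP K G n.
Proof.
move=> [r [e [d [eh dh esurj e0 dex]]]].
exists r, (Elift e), (fun i => Dlift (d i)); split.
- exact: Elift_hom.
- by move=> i; apply: Dlift_hom.
- move=> m.
  pose f c := proj1_sig (constructive_indefinite_description _ (esurj (m c))).
  exists (unslice (finsupp m) f); apply/fsfunP => c.
  rewrite EliftE // slice_unslice; case: ifP => cm.
    by rewrite /f; case: constructive_indefinite_description.
  rewrite ehom_zero //; apply/esym/eqP.
  by rewrite -[_ == 0]negbK -mem_finsupp cm.
- move=> npos x; split.
  + move=> H; apply: lift_pre => // c; apply/(e0 npos).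
    by have := congr1 (fun m : KG K G => m c) H; rewrite /= EliftE // kg_zeroE.
  + move=> [y <-]; apply/fsfunP => c.
    rewrite EliftE // slice_Dlift // kg_zeroE.
    by apply/(e0 npos); exists (slice y c).
- move=> i lt x; split.
  + move=> H; apply: lift_pre => // c; apply/(dex i lt).
    by have := congr1 (fun w => slice w c) H; rewrite slice_Dlift // slice_zero.
  + move=> [y <-]; apply: slice_inj => c.
    rewrite slice_zero !slice_Dlift //.
    by apply/(dex i lt); exists (slice y c).
Qed.
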